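(* For every temporal oriented tree $\mathcal T$, the connectivity graph $G$ of $\mathcal T$ contains no induced cycle of length $6$.
   Context: A temporal digraph is a pair $(D,\lambda)$ with $D=(V,A)$ a finite digraph and $\lambda:A\to 2^{\{1,\dots,t_{\max}\}}$ giving the time-steps at which each arc is active. A temporal oriented tree $\mathcal T=(T,\lambda)$ is one whose underlying digraph $T$ is an orientation of a tree. A temporal path is a sequence $(v_1,v_2,t_1),\dots,(v_{k-1},v_k,t_{k-1})$ with pairwise distinct $v_i$, $\overrightarrow{v_iv_{i+1}}\in A$, $t_i\in\lambda(\overrightarrow{v_iv_{i+1}})$ and $t_1<\dots<t_{k-1}$. Two vertices $u\ne v$ are temporally connected if there is a temporal path from $u$ to $v$ or from $v$ to $u$. The connectivity graph of $\mathcal T$ is the undirected graph $G$ with $V(G)=V(T)$ and $uv\in E(G)$ iff $u\neq v$ and $u,v$ are temporally connected. *)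

(* Defs.v *)
From mathcomp Require Import all_boot.
Set Implicit Arguments. Unset Strict Implicit. Unset Printing Implicit Defensive.

Definition underlying (V : finType) (A : rel V) : rel V :=
  fun x y => A x y || A y x.

(* A tree (undirected, given by a symmetric relation E): nonempty,
   connected, and without cycles (a cycle being a closed walk through
   at least 3 pairwise distinct vertices). *)
Definition is_tree (V : finType) (E : rel V) : Prop :=
  [/\ 0 < #|V|,
      (forall x y, connect E x y) &
      (forall (x : V) (p : seq V),
          uniq (x :: p) -> 2 <= size p -> path E x p -> ~~ E (last x p) x)].

Definition oriented_tree (V : finType) (A : rel V) : Prop :=
  [/\ (forall x, ~~ A x x),
      (forall x y, A x y -> ~~ A y x) &
      is_tree (underlying A)].

(* A temporal path starting at u: the list s = [(v2,t1); ...; (vk,t_{k-1})]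
   with all v_i pairwise distinct, each (v_i, v_{i+1}) an arc active at
   time t_i, and t_1 < ... < t_{k-1}. *)
Definition temporal_path (V : finType) (A : rel V) (lam : V -> V -> seq nat)
    (u : V) (s : seq (V * nat)) : bool :=
  [&& path (fun p q : V * nat => A p.1 q.1 && (q.2 \in lam p.1 q.1)) (u, 0) s,
      sorted ltn (map snd s) &
      uniq (u :: map fst s)].

Definition temporal_reach (V : finType) (A : rel V) (lam : V -> V -> seq nat)
    (u v : V) : Prop :=
  exists s, temporal_path A lam u s /\ last u (map fst s) = v.

Definition conn_edge (V : finType) (A : rel V) (lam : V -> V -> seq nat)
    (u v : V) : Prop :=
  u <> v /\ (temporal_reach A lam u v \/ temporal_reach A lam v u).

Definition induced_cycle (V : finType) (G : V -> V -> Prop) (n : nat)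
    (c : 'I_n -> V) : Prop :=
  injective c /\
  forall i j : 'I_n, i != j ->
    (G (c i) (c j) <-> (j == ordS i) || (i == ordS j)).

(* Main.v *)
Require Import Defs.
From mathcomp Require Import all_boot zify.
Set Implicit Arguments. Unset Strict Implicit. Unset Printing Implicit Defensive.

Lemma path_suffix (T : eqType) (e : rel T) x p v :
  path e x p -> v \in x :: p -> exists q, path e v q /\ last v q = last x p.
Proof.
elim: p x => [|h p IH] x /=.
  by rewrite inE => _ /eqP ->; exists [::].
move=> /andP[exh ph]; rewrite inE => /orP[/eqP -> | vin].
  by exists (h :: p); rewrite /= exh ph.
by have [q [pq lq]] := IH h ph vin; exists q.
Qed.

Lemma path_prefix (T : eqType) (e : rel T) x p v :
  path e x p -> v \in p -> exists q, q != [::] /\ path e x q /\ last x q = v.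
Proof.
elim: p x => [|h p IH] x //=.
move=> /andP[exh ph]; rewrite inE => /orP[/eqP -> | vin].
  by exists [:: h]; rewrite /= exh.
have [q [qn [pq lq]]] := IH h ph vin.
by exists (h :: q); rewrite /= exh pq.
Qed.

Lemma no_dcycle (V : finType) (A : rel V) x p :
  oriented_tree A -> path A x p -> p != [::] -> last x p = x -> False.
Proof.
case=> irr asym [_ _ acyc].
case: p => [|w q] //= /andP[Axw pq] _ lq.
have xw : x != w by apply: contraTneq Axw => ->; rewrite (negbTE (irr w)).
case: (shortenP pq) lq => p' pp' up' _ lq.
case/lastP: p' pp' up' lq => [|r z] /=.
  by move=> _ _ wx; move: xw; rewrite wx eqxx.
rewrite last_rcons => + + zx; rewrite {}zx.
move=> + uu; rewrite rcons_path => /andP[pr Alx].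
have : uniq (rcons (w :: r) x) by [].
rewrite rcons_uniq => /andP[xn ur]; clear uu.
case: r pr Alx xn ur => [|r1 r] /=.
  by move=> _ Awx; move: (asym _ _ Axw); rewrite Awx.
move=> pr Alx xn ur.
have := acyc x (w :: r1 :: r); rewrite /= xn ur => /(_ isT isT).
rewrite /underlying Axw /=.
have -> : path (fun x y => A x y || A y x) r1 r.
  by move: pr => /andP[_]; apply: sub_path => a b ->.
move: pr => /andP[-> _] /=.
by rewrite Alx => /(_ isT).
Qed.

Definition Ry (V : finType) (A : rel V) (y : V) : rel V :=
  fun a b => underlying A a b && (a != y) && (b != y).

Definition same (V : finType) (A : rel V) (y u v : V) : bool :=
  (u != y) && (v != y) && connect (Ry A y) u v.

Lemma underlying_sym (V : finType) (A : rel V) : symmetric (underlying A).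
Proof. by move=> a b; rewrite /underlying orbC. Qed.

Lemma Ry_sym (V : finType) (A : rel V) y : symmetric (Ry A y).
Proof. by move=> a b; rewrite /Ry underlying_sym; case: (a != y); case: (b != y); rewrite ?andbF. Qed.

Lemma same_sym (V : finType) (A : rel V) y u v : same A y u v = same A y v u.
Proof.
by rewrite /same (sym_connect_sym (@Ry_sym V A y)); case: (u != y); case: (v != y).
Qed.

Lemma same_trans (V : finType) (A : rel V) y u v w :
  same A y u v -> same A y v w -> same A y u w.
Proof.
rewrite /same => /andP[/andP[-> _] c1] /andP[/andP[_ ->] c2] /=.
exact: connect_trans c1 c2.
Qed.

Lemma same_neq (V : finType) (A : rel V) y u v : same A y u v -> (u != y) && (v != y).
Proof. by case/andP. Qed.

Lemma avoid_same (V : finType) (A : rel V) y x p :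
  path (underlying A) x p -> y \notin x :: p -> same A y x (last x p).
Proof.
elim: p x => [|h p IH] x /=.
  by rewrite inE eq_sym /same => _ ->; rewrite connect0.
move=> /andP[exh ph]; rewrite !inE negb_or => /andP[yx yhp].
have := IH h ph yhp; rewrite /same => /andP[/andP[hy ->] c] /=.
rewrite eq_sym yx /=; apply: connect_trans c; apply: connect1.
by rewrite /Ry exh eq_sym yx hy.
Qed.

Lemma no_cut (V : finType) (A : rel V) y z :
  oriented_tree A -> underlying A y z ->
  connect (fun a b => underlying A a b && ~~ ((a == y) && (b == z))
                      && ~~ ((a == z) && (b == y))) z y -> False.
Proof.
move=> Ht; have Ht' := Ht; case: Ht' => irr asym [_ _ acyc] Eyz.
move=> /connectP [p pp yl].
set E' := (fun a b => _) in pp.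
have yz : y != z.
  by apply: contraTneq Eyz => ->; rewrite /underlying (negbTE (irr z)).
move: yl; case: (shortenP pp) => p' pp' up' _.
case/lastP: p' pp' up' => [|r x] /=.
  by move=> _ _ yzz; move: yz; rewrite yzz eqxx.
move=> + + yl; rewrite last_rcons in yl; subst x.
rewrite rcons_path => /andP[pr El] uu.
have : uniq (rcons (z :: r) y) by [].
rewrite rcons_uniq => /andP[yn ur]; clear uu.
case: r pr El yn ur => [|r1 r] /=.
  by rewrite /E' !eqxx /= andbF.
move=> /andP[E'zr1 pr] El yn ur.
have := acyc y (z :: r1 :: r); rewrite /= yn ur => /(_ isT isT).
rewrite Eyz /=.
have -> : underlying A z r1 by move: E'zr1; rewrite /E' => /andP[/andP[-> _] _].
have -> : path (underlying A) r1 r by apply: sub_path pr => a b /andP[/andP[-> _] _].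
move: El; rewrite /E' => /andP[/andP[-> _] _].
by move/(_ isT).
Qed.

Lemma cut_same (V : finType) (A : rel V) y z v :
  oriented_tree A -> underlying A y z -> same A y v z -> same A z v y -> False.
Proof.
move=> Ht Eyz /andP[_ c1] /andP[_ c2].
apply: (no_cut Ht Eyz).
have c1' : connect (Ry A y) z v by rewrite (sym_connect_sym (@Ry_sym V A y)).
apply: connect_trans (connect_sub _ c1') (connect_sub _ c2) => a b /andP[/andP[Eab ay] by_];
  apply: connect1; rewrite Eab /=.
- by rewrite (negbTE ay) (negbTE by_) !andbF.
- by rewrite (negbTE ay) (negbTE by_) !andbF.
Qed.

Lemma neighbor (V : finType) (A : rel V) y a :
  oriented_tree A -> a != y -> exists z, underlying A y z /\ same A y z a.
Proof.
case=> irr asym [_ conn _] ay.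
case/connectP: (conn y a) => p pp al.
move: al; case: (shortenP pp) => p' pp' up' _ al.
case: p' pp' up' al => [|z r] /=.
  by move=> _ _ al; move: ay; rewrite al eqxx.
move=> /andP[Eyz pr] /andP[yn ur] al.
exists z; split => //.
rewrite al; apply: avoid_same pr yn.
Qed.

Lemma side (V : finType) (A : rel V) y z v :
  oriented_tree A -> underlying A y z -> v != y -> v != z ->
  ~~ same A z v y -> same A y v z.
Proof.
move=> Ht Eyz vy vz; have Ht' := Ht; case: Ht' => irr asym [_ conn _].
have yz : y != z.
  by apply: contraTneq Eyz => ->; rewrite /underlying (negbTE (irr z)) .
case/connectP: (conn v y) => p pp yl.
move: yl; case: (shortenP pp) => p' pp' up' _ yl.
have [zin|zn] := boolP (z \in v :: p'); last first.
  by have := avoid_same pp' zn; rewrite -yl => ->.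
move=> _.
move: zin; rewrite inE eq_sym (negbTE vz) /= => zin.
case/splitPr: zin pp' up' yl => p1 p2.
rewrite cat_path => /andP[pp1 /= /andP[Elz _]] up yl.
have yn : y \notin v :: rcons p1 z.
  case: p2 up yl => [|h p2] up yl.
    by move: yz; rewrite yl last_cat /= eqxx.
  have yin : y \in h :: p2 by rewrite yl last_cat /= mem_last.
  move: up; rewrite -cat_rcons => up; have : uniq ((v :: rcons p1 z) ++ h :: p2) by []. rewrite cat_uniq => /and3P[_ H _].
  apply/negP => yv; move/hasP: H; apply; exists y => //.
have := @avoid_same V A y v (rcons p1 z).
rewrite rcons_path pp1 Elz last_rcons => /(_ isT yn).
by [].
Qed.

Definition cnt (V : finType) (A : rel V) (c : 'I_6 -> V) y a :=
  #|[set j | same A y (c j) a]|.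

Lemma descent (V : finType) (A : rel V) (c : 'I_6 -> V) n :
  oriented_tree A -> forall y a, #|[set v | same A y v a]| < n ->
  3 < cnt A c y a -> exists y', forall a, cnt A c y' a <= 3.
Proof.
move=> Ht; elim: n => [|n IH] y a //.
move=> Hn Hb.
have ay : a != y.
  move: Hb; rewrite /cnt; case: (set_0Vmem [set j | same A y (c j) a]) => [->|[j]].
    by rewrite cards0.
  by rewrite inE => /same_neq /andP[].
have [z [Eyz Syza]] := neighbor Ht ay.
have [Hg|] := boolP [forall a', cnt A c z a' <= 3].
  by exists z => a'; move/forallP: Hg.
rewrite negb_forall => /existsP [a' Ha']; rewrite -ltnNge in Ha'.
apply: (IH z a') => //.
have nzy : ~~ same A z y a'.
  apply/negP => Szya.
  have sub : [set j | same A z (c j) a'] \subset ~: [set j | same A y (c j) a].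
    apply/subsetP => j; rewrite !inE => Sj; apply/negP => Sj'.
    apply: (cut_same Ht Eyz (v := c j)).
      by apply: same_trans Sj' _; rewrite same_sym.
    by apply: same_trans Sj _; rewrite same_sym.
  have := subset_leq_card sub.
  have := cardsC [set j | same A y (c j) a]; rewrite card_ord.
  move: Ha' Hb; rewrite /cnt; lia.
rewrite ltnS in Hn; apply: (leq_trans _ Hn); apply: proper_card; apply/properP; split.
  apply/subsetP => v; rewrite !inE => Sv.
  have vy : v != y.
    by apply: contraNneq nzy => <-.
  have vz : v != z by case/andP: Sv => /andP[].
  have nzv : ~~ same A z v y.
    by apply: contraNN nzy => H; apply: same_trans Sv; rewrite same_sym.
  apply: same_trans (side Ht Eyz vy vz nzv) Syza.
exists z; rewrite !inE //.
by rewrite /same eqxx.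
Qed.

Lemma centroid (V : finType) (A : rel V) (c : 'I_6 -> V) :
  oriented_tree A -> exists y, forall a, cnt A c y a <= 3.
Proof.
move=> Ht.
have [Hg|] := boolP [forall a, cnt A c (c ord0) a <= 3].
  by exists (c ord0) => a; move/forallP: Hg.
rewrite negb_forall => /existsP [a Ha]; rewrite -ltnNge in Ha.
exact: (descent (n := #|[set v | same A (c ord0) v a]|.+1) Ht (y := c ord0) (a := a)).
Qed.

Definition TR (V : finType) (A : rel V) (lam : V -> V -> seq nat) :=
  (fun p q : V * nat => A p.1 q.1 && (q.2 \in lam p.1 q.1)).

Lemma proj_path (V : finType) (A : rel V) lam x s :
  path (TR A lam) x s -> path A x.1 (map fst s).
Proof.
elim: s x => [|h s IH] x //= /andP[/andP[-> _] ps]; exact: IH.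
Qed.

Lemma TR_fst (V : finType) (A : rel V) lam y a1 a2 p :
  path (TR A lam) (y, a1) p = path (TR A lam) (y, a2) p.
Proof. by case: p. Qed.

Lemma pos_times (V : finType) (A : rel V) lam st s :
  (forall x y t, t \in lam x y -> 1 <= t) ->
  temporal_path A lam st s -> path ltn 0 (map snd s).
Proof.
move=> Ht /and3P[pp srt _].
case: s pp srt => [|h s] //= /andP[/andP[_ hin] _] ->.
by rewrite andbT; apply: Ht hin.
Qed.

Lemma decomp (V : finType) y (x : V * nat) s :
  y \in x.1 :: map fst s -> exists pre post, s = pre ++ post /\ (last x pre).1 = y.
Proof.
elim: s x => [|h s IH] x /=.
  by rewrite inE => /eqP ->; exists [::], [::].
rewrite inE => /orP[/eqP -> | yin].
  by exists [::], (h :: s).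
have [pre [post [-> l]]] := IH h yin.
by exists (h :: pre), post.
Qed.

Definition onpath (V : finType) (A : rel V) lam (y st en : V) (al : nat) :=
  exists s pre post, [/\ temporal_path A lam st s, last st (map fst s) = en,
     s = pre ++ post & last (st, 0) pre = (y, al)].

Lemma reach_on (V : finType) (A : rel V) lam y st en :
  temporal_reach A lam st en -> (exists al, onpath A lam y st en al) \/ same A y st en.
Proof.
case=> s [tp le].
have [yin|yn] := boolP (y \in st :: map fst s).
  have [pre [post [ds l]]] := decomp (x := (st, 0)) yin.
  left; exists (last (st, 0) pre).2, s, pre, post; split => //.
  by rewrite -l; case: (last _ _).
right; rewrite -le; apply: avoid_same yn.
case/and3P: tp => pp _ _.
by apply: sub_path (proj_path pp) => a b H; rewrite /underlying H.
Qed.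

Lemma ltn_path_weak b1 b2 s : b1 <= b2 -> path ltn b2 s -> path ltn b1 s.
Proof. by case: s => //= h s le /andP[lt ->]; rewrite andbT; apply: leq_ltn_trans lt. Qed.

Lemma VX (V : finType) (A : rel V) lam y a b c d al1 al2 :
  (forall x y t, t \in lam x y -> 1 <= t) -> oriented_tree A ->
  onpath A lam y a b al1 -> onpath A lam y c d al2 -> al1 <= al2 ->
  temporal_reach A lam a d.
Proof.
move=> Hpos Ht [s1 [pre1 [post1 [tp1 le1 ds1 l1]]]] [s2 [pre2 [post2 [tp2 le2 ds2 l2]]]] le.
have pt1 := pos_times Hpos tp1; have pt2 := pos_times Hpos tp2.
move: tp1 tp2 => /and3P[pp1 _ u1] /and3P[pp2 _ u2].
subst s1 s2.
move: pp1 pp2; rewrite !cat_path l1 l2 => /andP[pp1 _] /andP[_ pq2].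
move: pt1 pt2; rewrite !map_cat !cat_path => /andP[pt1 _] /andP[_ pt2].
have lm1 : last 0 (map snd pre1) = al1 by rewrite (last_map snd pre1 (a, 0)) l1.
have lm2 : last 0 (map snd pre2) = al2 by rewrite (last_map snd pre2 (c, 0)) l2.
have lf1 : last a (map fst pre1) = y by rewrite (last_map fst pre1 (a, 0)) l1.
have lf2 : last c (map fst pre2) = y by rewrite (last_map fst pre2 (c, 0)) l2.
rewrite lm2 in pt2.
exists (pre1 ++ post2); split; last first.
  by rewrite -le2 !map_cat !last_cat lf1 lf2.
apply/and3P; split.
- by rewrite cat_path l1 pp1 /=; move: pq2; clear; case: post2.
- apply: (path_sorted (x := 0)).
  by rewrite map_cat cat_path pt1 lm1 (ltn_path_weak le pt2).
- move: u1 u2; rewrite !map_cat -!cat_cons !cat_uniq => /and3P[u1 _ _] /and3P[_ _ u2].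
  rewrite u1 u2 andbT /=.
  apply/hasP => [[v vin2 vin1]].
  have pa1 := proj_path pp1; have pa2 := proj_path pq2.
  have [q1 [pq1 lq1]] := path_suffix pa1 vin1.
  have [q2 [nq2 [pq2' lq2]]] := path_prefix pa2 vin2.
  rewrite /= in lq1 pq2'.
  apply: (no_dcycle (x := v) (p := q1 ++ q2) Ht).
  + by rewrite cat_path pq1 lq1 lf1 pq2'.
  + by case: q1 {pq1 lq1}; case: q2 nq2 {pq2' lq2}.
  + by rewrite last_cat lq1 lf1 lq2.
Qed.

Lemma boolcomb (d0 d1 d2 d3 d4 d5 : bool) :
  ~~ [&& ~~ d0, ~~ d1 & ~~ d2] -> ~~ [&& ~~ d1, ~~ d2 & ~~ d3] ->
  ~~ [&& ~~ d2, ~~ d3 & ~~ d4] -> ~~ [&& ~~ d3, ~~ d4 & ~~ d5] ->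
  ~~ [&& ~~ d4, ~~ d5 & ~~ d0] -> ~~ [&& ~~ d5, ~~ d0 & ~~ d1] ->
  [|| d0 && d3, d1 && d4, d2 && d5, [&& d0, d2 & d4] | [&& d1, d3 & d5]].
Proof. by case: d0; case: d1; case: d2; case: d3; case: d4; case: d5. Qed.

Lemma ordS_neq (i : 'I_6) : ordS i != i.
Proof. by case: i => [[|[|[|[|[|[|k]]]]]] Hk]. Qed.

Lemma ordS_uniq4 (i : 'I_6) : uniq [:: i; ordS i; ordS (ordS i); ordS (ordS (ordS i))].
Proof. by case: i => [[|[|[|[|[|[|k]]]]]] Hk]. Qed.

Lemma nonadj (V : finType) (A : rel V) lam (c : 'I_6 -> V) p q :
  induced_cycle (conn_edge A lam) c -> p != q -> q != ordS p -> p != ordS q ->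
  ~ temporal_reach A lam (c p) (c q).
Proof.
move=> [cinj Hc] pq qp pq' R.
have := (Hc p q pq).1; rewrite (negbTE qp) (negbTE pq') /= => H.
suff : false by []; apply: H; split; last by left.
by move=> /cinj E; move: pq; rewrite E eqxx.
Qed.

Lemma pairC (V : finType) (A : rel V) lam y a b a' b' al1 al2 :
  (forall x y t, t \in lam x y -> 1 <= t) -> oriented_tree A ->
  onpath A lam y a b al1 -> onpath A lam y a' b' al2 ->
  ~ temporal_reach A lam a b' -> ~ temporal_reach A lam a' b -> False.
Proof.
move=> Hp Ht O1 O2 N1 N2; case: (leqP al1 al2) => H.
  exact: N1 (VX Hp Ht O1 O2 H).
exact: N2 (VX Hp Ht O2 O1 (ltnW H)).
Qed.

Lemma tripleC (V : finType) (A : rel V) lam y a1 b1 a2 b2 a3 b3 al1 al2 al3 :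
  (forall x y t, t \in lam x y -> 1 <= t) -> oriented_tree A ->
  onpath A lam y a1 b1 al1 -> onpath A lam y a2 b2 al2 -> onpath A lam y a3 b3 al3 ->
  (~ temporal_reach A lam a1 b2 \/ ~ temporal_reach A lam a1 b3) ->
  (~ temporal_reach A lam a2 b1 \/ ~ temporal_reach A lam a2 b3) ->
  (~ temporal_reach A lam a3 b1 \/ ~ temporal_reach A lam a3 b2) -> False.
Proof.
move=> Hp Ht O1 O2 O3 N1 N2 N3.
case: (leqP al1 al2) => H12; case: (leqP al1 al3) => H13; case: (leqP al2 al3) => H23.
all: try (case: N1 => N; apply: N; apply: VX Hp Ht O1 _ _; eauto; apply: ltnW; eauto; fail).
all: try (case: N2 => N; apply: N; apply: VX Hp Ht O2 _ _; eauto; apply: ltnW; eauto; fail).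
all: try (case: N3 => N; apply: N; apply: VX Hp Ht O3 _ _; eauto; apply: ltnW; eauto; fail).
all: lia.
Qed.

Lemma run_rule (V : finType) (A : rel V) (c : 'I_6 -> V) y (i : 'I_6) :
  (forall a, cnt A c y a <= 3) ->
  same A y (c i) (c (ordS i)) -> same A y (c (ordS i)) (c (ordS (ordS i))) ->
  same A y (c (ordS (ordS i))) (c (ordS (ordS (ordS i)))) -> False.
Proof.
move=> Hg S1 S2 S3.
have := Hg (c i); rewrite /cnt cardE leqNgt => /negP; apply.
apply: (@leq_trans (size [:: i; ordS i; ordS (ordS i); ordS (ordS (ordS i))])) => //.
apply: uniq_leq_size (ordS_uniq4 i) _.
have S0 : same A y (c i) (c i).
  by move: S1; rewrite /same => /andP[/andP[-> _] _]; rewrite connect0.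
move=> k; rewrite !inE mem_enum inE.
case/or4P => /eqP ->.
- exact: S0.
- by rewrite same_sym.
- by rewrite same_sym; apply: same_trans S1 S2.
- by rewrite same_sym; apply: same_trans (same_trans S1 S2) S3.
Qed.

Definition Pon (V : finType) (A : rel V) lam (c : 'I_6 -> V) y (i : 'I_6) :=
  exists st en al, ((st = c i /\ en = c (ordS i)) \/ (st = c (ordS i) /\ en = c i))
    /\ onpath A lam y st en al.

Lemma dP (V : finType) (A : rel V) lam (c : 'I_6 -> V) y (i : 'I_6) :
  induced_cycle (conn_edge A lam) c -> ~~ same A y (c i) (c (ordS i)) -> Pon A lam c y i.
Proof.
move=> [cinj Hc] ns.
have := (Hc i (ordS i)); rewrite eq_sym ordS_neq eqxx /= => /(_ isT) [_ /(_ isT) [_ [R|R]]].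
  case: (reach_on y R) => [[al O]|S]; last by rewrite S in ns.
  by exists (c i), (c (ordS i)), al; split => //; left.
case: (reach_on y R) => [[al O]|S]; last by rewrite same_sym S in ns.
by exists (c (ordS i)), (c i), al; split => //; right.
Qed.

Definition o (k : nat) : 'I_6 := iter k (@ordS 6) ord0.

Lemma o6 : o 6 = o 0. Proof. by apply: val_inj. Qed.
Lemma o7 : o 7 = o 1. Proof. by apply: val_inj. Qed.
Lemma o8 : o 8 = o 2. Proof. by apply: val_inj. Qed.

Lemma test (V : finType) (A : rel V) lam (c : 'I_6 -> V) :
  induced_cycle (conn_edge A lam) c -> ~ temporal_reach A lam (c (o 0)) (c (ordS (o 3))).
Proof. move=> IC; apply: nonadj IC _ _ _ => //. Qed.

Ltac nadj IC := by apply: (nonadj IC).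
Unset Implicit Arguments.

Theorem mainTheorem10 (V : finType) (A : rel V) (tmax : nat)
    (lam : V -> V -> seq nat)
    (Htimes : forall x y t, t \in lam x y -> 1 <= t <= tmax)
    (Htree : oriented_tree A) :
  ~ exists c : 'I_6 -> V, induced_cycle (conn_edge A lam) c.
Proof.
move=> [c IC].
have Hp : forall x y t, t \in lam x y -> 1 <= t.
  by move=> x y t /Htimes /andP[].
have [y Hg] := centroid c Htree.
have R k : same A y (c (o k)) (c (o k.+1)) -> same A y (c (o k.+1)) (c (o k.+2)) ->
    same A y (c (o k.+2)) (c (o k.+3)) -> False by exact: run_rule.
have D k : ~~ same A y (c (o k)) (c (o k.+1)) -> Pon A lam c y (o k) by exact: dP.
have := boolcomb (d0 := ~~ same A y (c (o 0)) (c (o 1)))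
                 (d1 := ~~ same A y (c (o 1)) (c (o 2)))
                 (d2 := ~~ same A y (c (o 2)) (c (o 3)))
                 (d3 := ~~ same A y (c (o 3)) (c (o 4)))
                 (d4 := ~~ same A y (c (o 4)) (c (o 5)))
                 (d5 := ~~ same A y (c (o 5)) (c (o 0))).
rewrite !negbK.
have NR k : ~~ [&& same A y (c (o k)) (c (o k.+1)), same A y (c (o k.+1)) (c (o k.+2))
         & same A y (c (o k.+2)) (c (o k.+3))].
  by apply/negP => /and3P[S1 S2 S3]; apply: R S1 S2 S3.
have := NR 3; have := NR 4; have := NR 5; rewrite o6 o7 o8.
move=> -> -> -> /(_ (NR 0) (NR 1) (NR 2) isT isT isT).
have D5 : ~~ same A y (c (o 5)) (c (o 0)) -> Pon A lam c y (o 5) by rewrite -o6; exact: D.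
case/orP => [|/orP[|/orP[|/orP[]]]].
- case/andP => /D P0 /D P3; case: P0 => [? [? [? [[[-> ->]|[-> ->]] O1]]]];
  case: P3 => [? [? [? [[[-> ->]|[-> ->]] O2]]]];
  apply: (pairC Hp Htree O1 O2); nadj IC.
- case/andP => /D P0 /D P3; case: P0 => [? [? [? [[[-> ->]|[-> ->]] O1]]]];
  case: P3 => [? [? [? [[[-> ->]|[-> ->]] O2]]]];
  apply: (pairC Hp Htree O1 O2); nadj IC.
- case/andP => /D P0 /D5 P3; case: P0 => [? [? [? [[[-> ->]|[-> ->]] O1]]]];
  case: P3 => [? [? [? [[[-> ->]|[-> ->]] O2]]]];
  apply: (pairC Hp Htree O1 O2); nadj IC.
- case/and3P => /D P0 /D P2 /D P4; case: P0 => [? [? [? [[[-> ->]|[-> ->]] O1]]]];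
  case: P2 => [? [? [? [[[-> ->]|[-> ->]] O2]]]];
  case: P4 => [? [? [? [[[-> ->]|[-> ->]] O3]]]];
  apply: (tripleC Hp Htree O1 O2 O3); first [left; nadj IC | right; nadj IC].
- case/and3P => /D P0 /D P2 /D5 P4; case: P0 => [? [? [? [[[-> ->]|[-> ->]] O1]]]];
  case: P2 => [? [? [? [[[-> ->]|[-> ->]] O2]]]];
  case: P4 => [? [? [? [[[-> ->]|[-> ->]] O3]]]];
  apply: (tripleC Hp Htree O1 O2 O3); first [left; nadj IC | right; nadj IC].
Qed.
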